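(* Let $(X_m)_{m\in\mathbb Z}$ be a homogeneous second order recurrence sequence with constant coefficients. For integers $a,b,c,d,e$ put $$\Delta=X_{d-a}X_{e-b}-X_{e-a}X_{d-b},\quad \Delta_1=X_{d-c}X_{e-b}-X_{e-c}X_{d-b},\quad \Delta_2=X_{d-a}X_{e-c}-X_{e-a}X_{d-c},$$ and suppose $\Delta_1\neq0$ and $\Delta_2\neq0$. Then for every nonnegative integer $k$ and every integer $m$: $$\sum_{r=0}^k\binom kr\left(\frac{\Delta_1}{\Delta_2}\right)^rX_{m-(b-c)k+(b-a)r}=\left(\frac{\Delta}{\Delta_2}\right)^kX_m,$$ $$\sum_{r=0}^k\binom kr\left(\frac{-\Delta}{\Delta_2}\right)^rX_{m+(a-b)k+(b-c)r}=\left(\frac{\Delta_1}{-\Delta_2}\right)^kX_m,$$ $$\sum_{r=0}^k\binom kr\left(\frac{-\Delta}{\Delta_1}\right)^rX_{m+(b-a)k+(a-c)r}=\left(\frac{\Delta_2}{-\Delta_1}\right)^kX_m.$$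
   Context: A homogeneous second order recurrence sequence with constant coefficients is a sequence $(X_m)_{m\in\mathbb Z}$ of complex numbers for which there are constants $p,q\in\mathbb C$, $q\neq 0$, with $X_m=pX_{m-1}+qX_{m-2}$ for all $m\in\mathbb Z$. Here $0^0=1$. *)

(* Defs.v *)
From HB Require Import structures.
From mathcomp Require Import all_boot all_order all_algebra.
Set Implicit Arguments. Unset Strict Implicit. Unset Printing Implicit Defensive.
Import Order.TTheory GRing.Theory Num.Theory.
Local Open Scope ring_scope.

Definition second_order_rec (R : pzRingType) (X : int -> R) : Prop :=
  exists p q : R, q != 0 /\ forall m : int, X m = p * X (m - 1) + q * X (m - 2).

(* Main.v *)
Require Import Defs.
From HB Require Import structures.
From mathcomp Require Import all_boot all_order all_algebra ring.
Import Order.TTheory GRing.Theory Num.Theory.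
Local Open Scope ring_scope.

Section Aux.
Variable C : fieldType.

Lemma zero_ind (Y : int -> C) (p q : C) : q != 0 ->
  (forall m : int, Y m = p * Y (m - 1) + q * Y (m - 2)) ->
  Y 0 = 0 -> Y 1 = 0 -> forall m, Y m = 0.
Proof.
move=> qn0 HY Y0 Y1.
have Fw : forall n : nat, Y n%:Z = 0 /\ Y (n%:Z + 1) = 0.
  elim=> [|n [IH1 IH2]]; first by rewrite Y0 add0r Y1.
  split; first by rewrite intS addrC.
  rewrite HY.
  have -> : n.+1%:Z + 1 - 1 = n%:Z + 1 by rewrite intS; ring.
  have -> : n.+1%:Z + 1 - 2 = n%:Z by rewrite intS; ring.
  by rewrite IH1 IH2 !mulr0 addr0.
have Bw : forall n : nat, Y (- n%:Z) = 0 /\ Y (1 - n%:Z) = 0.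
  elim=> [|n [IH1 IH2]]; first by rewrite oppr0 Y0 subr0 Y1.
  split; last by rewrite intS opprD addrA subrr add0r.
  have := HY (1 - n%:Z).
  have -> : 1 - n%:Z - 1 = - n%:Z by ring.
  have -> : 1 - n%:Z - 2 = - n.+1%:Z by rewrite intS; ring.
  rewrite IH1 IH2 mulr0 add0r => /esym /eqP.
  by rewrite mulf_eq0 (negPf qn0) => /eqP.
case=> n; first by case: (Fw n).
by rewrite NegzE; case: (Bw n.+1).
Qed.

Variables (p q : C) (Y W Z : int -> C).
Hypothesis qn0 : q != 0.
Hypothesis HY : forall m : int, Y m = p * Y (m - 1) + q * Y (m - 2).
Hypothesis HW : forall m : int, W m = p * W (m - 1) + q * W (m - 2).
Hypothesis HZ : forall m : int, Z m = p * Z (m - 1) + q * Z (m - 2).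

Definition det3 n d e :=
  Y n * (W d * Z e - W e * Z d) - W n * (Y d * Z e - Y e * Z d)
  + Z n * (Y d * W e - Y e * W d).

Lemma det3_cyc n d e : det3 n d e = det3 d e n.
Proof. rewrite /det3; ring. Qed.

Lemma det3_ind d e : det3 0 d e = 0 -> det3 1 d e = 0 -> forall n, det3 n d e = 0.
Proof.
apply: (@zero_ind (fun n => det3 n d e) p q qn0) => m; rewrite /det3 (HY m) (HW m) (HZ m); ring.
Qed.

Lemma det3_0 n d e : det3 n d e = 0.
Proof.
have S2 : forall n d e : int, (d == 0) || (d == 1) -> (e == 0) || (e == 1) ->
   det3 n d e = 0.
  move=> n0 d0 e0 /orP[] /eqP -> /orP[] /eqP ->;
   apply: det3_ind; rewrite /det3; ring.
have S3 : forall n d e : int, (e == 0) || (e == 1) -> det3 n d e = 0.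
  move=> n0 d0 e0 He; rewrite det3_cyc.
  by apply: det3_ind; rewrite -det3_cyc; apply: S2; rewrite ?eqxx ?orbT.
rewrite det3_cyc det3_cyc.
by apply: det3_ind; rewrite det3_cyc; apply: S3; rewrite ?eqxx ?orbT.
Qed.
End Aux.

Lemma binom_shift (C : fieldType) (X : int -> C) (g bet : C) (s u : int) :
  (forall j, g * X j = X (j + s) + bet * X (j + s + u)) ->
  forall (k : nat) (m : int),
  \sum_(0 <= r < k.+1) 'C(k, r)%:R * bet ^+ r * X (m + s * k%:Z + u * r%:Z)
   = g ^+ k * X m.
Proof.
move=> H; elim=> [|k IH] m.
  by rewrite big_nat1 bin0 expr0 !mulr0 !addr0 !mul1r.
rewrite exprS -mulrA mulrCA H mulrDr mulrCA -!IH !big_mkord.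
rewrite big_ord_recl bin0 expr0 mul1r.
under eq_bigr => i _ do rewrite binS natrD !mulrDl.
rewrite big_split /= addrA mulr_sumr.
congr (_ + _).
  rewrite [in LHS]big_ord_recr /= bin_small // mul0r mul0r addr0.
  rewrite [in RHS]big_ord_recl bin0 expr0 mul1r mulr0 addr0.
  have -> : m + s * k.+1%:Z = m + s + s * k%:Z by rewrite intS; ring.
  congr (_ + _); first by rewrite !mul1r addr0.
apply: eq_bigr => i _; rewrite /bump /= exprS.
have -> : m + s * k.+1%:Z + u * (1 + i)%N%:Z = m + s + u + s * k%:Z + u * i%:Z.
  by rewrite intS PoszD; ring.
ring.
Qed.

Theorem lemma6 (C : numClosedFieldType) (X : int -> C)
  (HX : second_order_rec X) (a b c d e : int) :
  let D  := X (d - a) * X (e - b) - X (e - a) * X (d - b) in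
  let D1 := X (d - c) * X (e - b) - X (e - c) * X (d - b) in
  let D2 := X (d - a) * X (e - c) - X (e - a) * X (d - c) in
  D1 != 0 -> D2 != 0 ->
  forall (k : nat) (m : int),
    [/\ \sum_(0 <= r < k.+1) 'C(k, r)%:R * (D1 / D2) ^+ r
          * X (m - (b - c) * k%:Z + (b - a) * r%:Z) = (D / D2) ^+ k * X m,
        \sum_(0 <= r < k.+1) 'C(k, r)%:R * (- D / D2) ^+ r
          * X (m + (a - b) * k%:Z + (b - c) * r%:Z) = (D1 / - D2) ^+ k * X m
      & \sum_(0 <= r < k.+1) 'C(k, r)%:R * (- D / D1) ^+ r
          * X (m + (b - a) * k%:Z + (a - c) * r%:Z) = (D2 / - D1) ^+ k * X m].
Proof.
move=> D D1 D2 D1n0 D2n0 k m.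
case: HX => p [q [qn0 Hrec]].
have Hs : forall t : int, forall n : int,
    X (n - t) = p * X (n - 1 - t) + q * X (n - 2 - t).
  move=> t n; rewrite Hrec.
  have -> : n - t - 1 = n - 1 - t by ring.
  by have -> : n - t - 2 = n - 2 - t by ring.
have rel : forall n, - D1 * X (n - a) - D2 * X (n - b) + D * X (n - c) = 0.
  move=> n.
  have := @det3_0 C p q (fun n => X (n - a)) (fun n => X (n - b)) (fun n => X (n - c)) qn0 (Hs a) (Hs b) (Hs c) n d e.
  rewrite /det3 /D /D1 /D2 => <-; ring.
split.
- have -> : \sum_(0 <= r < k.+1) 'C(k, r)%:R * (D1 / D2) ^+ r
          * X (m - (b - c) * k%:Z + (b - a) * r%:Z) =
     \sum_(0 <= r < k.+1) 'C(k, r)%:R * (D1 / D2) ^+ r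
          * X (m + (c - b) * k%:Z + (b - a) * r%:Z).
    by apply: eq_bigr => r _; congr (_ * X _); ring.
  apply: binom_shift => j.
  have := rel (j + c).
  have -> : j + c - a = j + (c - b) + (b - a) by ring.
  have -> : j + c - b = j + (c - b) by ring.
  have -> : j + c - c = j by ring.
  set xa := X (j + (c - b) + (b - a)); set xb := X (j + (c - b)).
  move=> E.
  have Hb : xb * D2 = D * X j - D1 * xa.
    rewrite -[RHS]subr0 -{1}E; ring.
  by rewrite -[xb](mulfK D2n0) Hb; field; rewrite ?oppr_eq0 ?D1n0 ?D2n0.
- pose proof (@binom_shift _ X (D1 / - D2) (- D / D2) (a - b) (b - c)) as BS.
  apply: BS => j.
  have := rel (j + a).
  have -> : j + a - a = j by ring.
  have -> : j + a - b = j + (a - b) by ring.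
  have -> : j + a - c = j + (a - b) + (b - c) by ring.
  set xc := X (j + (a - b) + (b - c)); set xb := X (j + (a - b)).
  move=> E.
  have Hb : xb * D2 = D * xc - D1 * X j.
    rewrite -[RHS]subr0 -{1}E; ring.
  by rewrite -[xb](mulfK D2n0) Hb; field; rewrite ?oppr_eq0 ?D1n0 ?D2n0.
- apply: (@binom_shift _ X (D2 / - D1) (- D / D1) (b - a) (a - c)) => j.
  have := rel (j + b).
  have -> : j + b - a = j + (b - a) by ring.
  have -> : j + b - b = j by ring.
  have -> : j + b - c = j + (b - a) + (a - c) by ring.
  set xc := X (j + (b - a) + (a - c)); set xa := X (j + (b - a)).
  move=> E.
  have Hb : xa * D1 = D * xc - D2 * X j.
    rewrite -[RHS]subr0 -{1}E; ring.
  by rewrite -[xa](mulfK D1n0) Hb; field; rewrite ?oppr_eq0 ?D1n0 ?D2n0.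
Qed.
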